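(* For all $M\in\Lambda_R$: if $M\to^* M_1$ and $M\to^* M_2$, then there is $M_3\in\Lambda_R$ such that $M_1\to^* M_3$ and $M_2\to^* M_3$.
   Context: $\Lambda_R\ni M,N ::= x\mid\lambda x.M\mid MN\mid M.l\mid R\mid M\oplus R$, with records $R ::= \langle l_i=M_i\mid i\in I\rangle$ ($I$ finite, labels pairwise distinct), $x$ ranging over variables and $l$ over labels; terms are identified up to renaming of bound variables. Reduction $\to$ is the least compatible relation (closed under all term constructors) containing $(\lambda x.M)N\to M[N/x]$ (capture-avoiding substitution); $\langle l_i=M_i\mid i\in I\rangle.l_j\to M_j$ if $j\in I$; $\langle l_i=M_i\mid i\in I\rangle\oplus\langle l_j=N_j\mid j\in J\rangle\to\langle l_i=M_i,\ l_j=N_j\mid i\in I\setminus J,\ j\in J\rangle$. $\to^*$ is the reflexive transitive closure of $\to$. *)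

(* Defs.v *)
From Stdlib Require Import List Arith Sorted.
Import ListNotations.

Definition label := nat.

(* Terms up to alpha-equivalence: de Bruijn indices.
   Rec fs      : record < l_i = M_i | i in I >
   Ext M fs    : M (+) R   (the right operand is syntactically a record)   *)
Inductive term : Type :=
| Var  : nat -> term
| Lam  : term -> term
| App  : term -> term -> term
| Proj : term -> label -> term
| Rec  : list (label * term) -> term
| Ext  : term -> list (label * term) -> term.

Fixpoint shift (c : nat) (t : term) : term :=
  match t with
  | Var n => if c <=? n then Var (S n) else Var n
  | Lam M => Lam (shift (S c) M)
  | App M N => App (shift c M) (shift c N)
  | Proj M l => Proj (shift c M) l
  | Rec fs => Rec (map (fun '(l, M) => (l, shift c M)) fs)
  | Ext M fs => Ext (shift c M) (map (fun '(l, N) => (l, shift c N)) fs)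
  end.

(* capture-avoiding substitution of N for index k (indices above k drop by one) *)
Fixpoint subst (k : nat) (N : term) (t : term) : term :=
  match t with
  | Var m => if m <? k then Var m else if m =? k then N else Var (pred m)
  | Lam M => Lam (subst (S k) (shift 0 N) M)
  | App M1 M2 => App (subst k N M1) (subst k N M2)
  | Proj M l => Proj (subst k N M) l
  | Rec fs => Rec (map (fun '(l, M) => (l, subst k N M)) fs)
  | Ext M fs => Ext (subst k N M) (map (fun '(l, P) => (l, subst k N P)) fs)
  end.

(* Records are represented canonically: fields listed with strictly
   increasing labels (so labels are pairwise distinct and a record is
   determined by its finite label->term map, independent of order). *)
Definition rec_ok (fs : list (label * term)) : Prop :=
  StronglySorted lt (map fst fs).

Inductive wf : term -> Prop :=
| wf_Var n : wf (Var n)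
| wf_Lam M : wf M -> wf (Lam M)
| wf_App M N : wf M -> wf N -> wf (App M N)
| wf_Proj M l : wf M -> wf (Proj M l)
| wf_Rec fs : rec_ok fs -> Forall (fun p => wf (snd p)) fs -> wf (Rec fs)
| wf_Ext M fs : wf M -> rec_ok fs -> Forall (fun p => wf (snd p)) fs ->
    wf (Ext M fs).

Fixpoint lookup (l : label) (fs : list (label * term)) : option term :=
  match fs with
  | [] => None
  | (k, M) :: fs' => if k =? l then Some M else lookup l fs'
  end.

(* Merge of two sorted records: fields of fs1 whose label is not in fs2,
   together with all fields of fs2 (fs2 wins on common labels); the result
   is again sorted. *)
Fixpoint rmerge (fs1 fs2 : list (label * term)) : list (label * term) :=
  match fs1 with
  | [] => fs2
  | (l, M) :: fs1' =>
      (fix aux (fs2 : list (label * term)) : list (label * term) :=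
         match fs2 with
         | [] => fs1
         | (k, N) :: fs2' =>
             if l <? k then (l, M) :: rmerge fs1' fs2
             else if k <? l then (k, N) :: aux fs2'
             else (k, N) :: rmerge fs1' fs2'
         end) fs2
  end.

Inductive step : term -> term -> Prop :=
| st_beta M N : step (App (Lam M) N) (subst 0 N M)
| st_proj fs l M : lookup l fs = Some M -> step (Proj (Rec fs) l) M
| st_ext fs1 fs2 : step (Ext (Rec fs1) fs2) (Rec (rmerge fs1 fs2))
| st_lam M M' : step M M' -> step (Lam M) (Lam M')
| st_appl M M' N : step M M' -> step (App M N) (App M' N)
| st_appr M N N' : step N N' -> step (App M N) (App M N')
| st_projc M M' l : step M M' -> step (Proj M l) (Proj M' l)
| st_rec fs fs' : fstep fs fs' -> step (Rec fs) (Rec fs')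
| st_extl M M' fs : step M M' -> step (Ext M fs) (Ext M' fs)
| st_extr M fs fs' : fstep fs fs' -> step (Ext M fs) (Ext M fs')
with fstep : list (label * term) -> list (label * term) -> Prop :=
| fs_here l M M' fs : step M M' -> fstep ((l, M) :: fs) ((l, M') :: fs)
| fs_there p fs fs' : fstep fs fs' -> fstep (p :: fs) (p :: fs').

Inductive red : term -> term -> Prop :=
| red_refl M : red M M
| red_step M N P : step M N -> red N P -> red M P.

(* Main.v *)
Require Import Defs.
From Stdlib Require Import List Arith Sorted Lia.
Import ListNotations.

Fixpoint term_ind' (P : term -> Prop)
  (Hv : forall n, P (Var n))
  (Hl : forall M, P M -> P (Lam M))
  (Ha : forall M N, P M -> P N -> P (App M N))
  (Hp : forall M l, P M -> P (Proj M l))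
  (Hr : forall fs, Forall (fun p => P (snd p)) fs -> P (Rec fs))
  (He : forall M fs, P M -> Forall (fun p => P (snd p)) fs -> P (Ext M fs))
  (t : term) {struct t} : P t :=
  match t with
  | Var n => Hv n
  | Lam M => Hl M (term_ind' P Hv Hl Ha Hp Hr He M)
  | App M N => Ha M N (term_ind' P Hv Hl Ha Hp Hr He M) (term_ind' P Hv Hl Ha Hp Hr He N)
  | Proj M l => Hp M l (term_ind' P Hv Hl Ha Hp Hr He M)
  | Rec fs => Hr fs ((fix G (fs : list (label*term)) : Forall (fun p => P (snd p)) fs :=
     match fs with
     | [] => Forall_nil _
     | (l, M) :: fs' => @Forall_cons _ (fun p => P (snd p)) (l, M) fs' (term_ind' P Hv Hl Ha Hp Hr He M) (G fs')
     end) fs)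
  | Ext M fs => He M fs (term_ind' P Hv Hl Ha Hp Hr He M) ((fix G (fs : list (label*term)) : Forall (fun p => P (snd p)) fs :=
     match fs with
     | [] => Forall_nil _
     | (l, M) :: fs' => @Forall_cons _ (fun p => P (snd p)) (l, M) fs' (term_ind' P Hv Hl Ha Hp Hr He M) (G fs')
     end) fs)
  end.

Definition fmap (f : term -> term) (fs : list (label*term)) : list (label*term) :=
  map (fun '(l, M) => (l, f M)) fs.

Lemma shift_Rec c fs : shift c (Rec fs) = Rec (fmap (shift c) fs). Proof. reflexivity. Qed.
Lemma shift_Ext c M fs : shift c (Ext M fs) = Ext (shift c M) (fmap (shift c) fs). Proof. reflexivity. Qed.
Lemma subst_Rec k N fs : subst k N (Rec fs) = Rec (fmap (subst k N) fs). Proof. reflexivity. Qed.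
Lemma subst_Ext k N M fs : subst k N (Ext M fs) = Ext (subst k N M) (fmap (subst k N) fs). Proof. reflexivity. Qed.

Lemma fmap_cons f l M fs : fmap f ((l,M)::fs) = (l, f M) :: fmap f fs. Proof. reflexivity. Qed.

Lemma fmap_ext f g fs : Forall (fun p => f (snd p) = g (snd p)) fs -> fmap f fs = fmap g fs.
Proof. induction fs as [|[l M] fs IH]; intros H; inversion H; subst; simpl in *; f_equal; auto; congruence. Qed.

Lemma fmap_fmap f g fs : fmap f (fmap g fs) = fmap (fun x => f (g x)) fs.
Proof. induction fs as [|[l M] fs IH]; simpl; f_equal; auto. Qed.

Lemma fmap_fst f fs : map fst (fmap f fs) = map fst fs.
Proof. induction fs as [|[l M] fs IH]; simpl; f_equal; auto. Qed.

Lemma lookup_fmap f l fs : lookup l (fmap f fs) = option_map f (lookup l fs).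
Proof. induction fs as [|[k M] fs IH]; simpl; auto. destruct (k =? l); auto. Qed.

Lemma rmerge_nil_l b : rmerge [] b = b. Proof. reflexivity. Qed.
Lemma rmerge_nil_r a : rmerge a [] = a. Proof. destruct a as [|[l M] a]; reflexivity. Qed.
Lemma rmerge_cc l M a k N b : rmerge ((l,M)::a) ((k,N)::b) =
  if l <? k then (l,M) :: rmerge a ((k,N)::b)
  else if k <? l then (k,N) :: rmerge ((l,M)::a) b
  else (k,N) :: rmerge a b.
Proof. reflexivity. Qed.

Lemma rmerge_fmap f a b : rmerge (fmap f a) (fmap f b) = fmap f (rmerge a b).
Proof.
  revert b; induction a as [|[l M] a IHa]; intros b; [reflexivity|].
  induction b as [|[k N] b IHb]; [rewrite !rmerge_nil_r; reflexivity|].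
  rewrite !fmap_cons, !rmerge_cc.
  destruct (l <? k); [rewrite <- fmap_cons, IHa; reflexivity|].
  destruct (k <? l); [rewrite <- fmap_cons, IHb; reflexivity|].
  rewrite IHa; reflexivity.
Qed.

Lemma rmerge_In p a b : In p (rmerge a b) -> In p a \/ In p b.
Proof.
  revert b; induction a as [|[l M] a IHa]; intros b; [simpl; auto|].
  induction b as [|[k N] b IHb]; [rewrite rmerge_nil_r; auto|].
  rewrite rmerge_cc.
  destruct (l <? k); [intros [H|H]; [left; left; auto|]; destruct (IHa _ H); simpl; auto|].
  destruct (k <? l); [intros [H|H]; [right; left; auto|]; destruct (IHb H); simpl in *; tauto|].
  intros [H|H]; [right; left; auto|]; destruct (IHa _ H); simpl; auto.
Qed.

Lemma rmerge_F2 (R : label*term -> label*term -> Prop) a a' b b' :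
  (forall p q, R p q -> fst p = fst q) ->
  Forall2 R a a' -> Forall2 R b b' -> Forall2 R (rmerge a b) (rmerge a' b').
Proof.
  intros HR Ha; revert b b'; induction Ha as [|[l M] [l' M'] a a' Hp Ha IHa]; intros b b' Hb;
    [exact Hb|].
  pose proof (HR _ _ Hp) as E; simpl in E; subst l'.
  induction Hb as [|[k N] [k' N'] b b' Hq Hb IHb]; [rewrite !rmerge_nil_r; constructor; auto|].
  pose proof (HR _ _ Hq) as E; simpl in E; subst k'.
  rewrite !rmerge_cc.
  destruct (l <? k); [constructor; auto; apply IHa; constructor; auto|].
  destruct (k <? l); constructor; auto.
Qed.

Lemma rmerge_In_fst x a b : In x (map fst (rmerge a b)) -> In x (map fst a) \/ In x (map fst b).
Proof.
  intros H; apply in_map_iff in H; destruct H as [p [<- Hp]].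
  destruct (rmerge_In _ _ _ Hp); [left|right]; apply in_map; auto.
Qed.

Lemma rmerge_sorted a b : StronglySorted lt (map fst a) -> StronglySorted lt (map fst b) ->
  StronglySorted lt (map fst (rmerge a b)).
Proof.
  revert b; induction a as [|[l M] a IHa]; intros b Ha Hb; [exact Hb|].
  induction b as [|[k N] b IHb]; [rewrite rmerge_nil_r; exact Ha|].
  simpl in Ha, Hb. inversion Ha as [|? ? Ha1 Ha2]; subst. inversion Hb as [|? ? Hb1 Hb2]; subst.
  rewrite Forall_forall in Ha2, Hb2.
  rewrite rmerge_cc.
  destruct (Nat.ltb_spec l k).
  { cbn [map fst]. constructor. apply IHa; auto.
    apply Forall_forall; intros x Hx; destruct (rmerge_In_fst _ _ _ Hx) as [H1|[H1|H1]]; simpl in *; subst; auto.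
    specialize (Hb2 _ H1); lia. }
  destruct (Nat.ltb_spec k l).
  { cbn [map fst]. constructor. apply IHb; auto.
    apply Forall_forall; intros x Hx; destruct (rmerge_In_fst _ _ _ Hx) as [[H1|H1]|H1]; simpl in *; subst; auto.
    specialize (Ha2 _ H1); lia. }
  assert (k = l) by lia; subst.
  cbn [map fst]. constructor. apply IHa; auto.
  apply Forall_forall; intros x Hx; destruct (rmerge_In_fst _ _ _ Hx) as [H1|H1]; auto.
Qed.

Ltac arith := repeat (cbn [shift subst pred]; match goal with
  | |- context [?a <=? ?b] => destruct (Nat.leb_spec a b)
  | |- context [?a <? ?b] => destruct (Nat.ltb_spec a b)
  | |- context [?a =? ?b] => destruct (Nat.eqb_spec a b) end); try lia; try reflexivity; try (f_equal; lia).

Ltac norm := repeat (first [rewrite shift_Rec | rewrite subst_Rec | rewrite shift_Ext | rewrite subst_Ext | rewrite fmap_fmap]).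

Ltac fcase IH := apply fmap_ext; eapply Forall_impl; [|exact IH]; intros [? ?]; simpl; intro HH.

Lemma shift_shift N : forall c c', c' <= c -> shift (S c) (shift c' N) = shift c' (shift c N).
Proof.
  induction N using term_ind'; intros c c' Hc.
  - arith.
  - simpl; f_equal; apply IHN; lia.
  - simpl; f_equal; auto.
  - simpl; f_equal; auto.
  - norm; f_equal; fcase H; auto.
  - norm; f_equal; auto; fcase H; auto.
Qed.

Lemma shift_subst_lo P : forall c i N, c <= i -> shift c (subst i N P) = subst (S i) (shift c N) (shift c P).
Proof.
  induction P using term_ind'; intros c i N Hc.
  - arith.
  - simpl; f_equal. rewrite IHP by lia. f_equal. rewrite shift_shift by lia; reflexivity.
  - simpl; f_equal; auto.
  - simpl; f_equal; auto.
  - norm; f_equal; fcase H; auto.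
  - norm; f_equal; auto; fcase H; auto.
Qed.

Lemma shift_subst_hi M : forall j c N, shift (j + c) (subst j N M) = subst j (shift (j + c) N) (shift (S (j + c)) M).
Proof.
  induction M using term_ind'; intros j c N.
  - arith.
  - simpl; f_equal. specialize (IHM (S j) c (shift 0 N)). simpl in IHM. rewrite IHM. f_equal. rewrite shift_shift by lia. reflexivity.
  - simpl; f_equal; auto.
  - simpl; f_equal; auto.
  - norm; f_equal; fcase H; auto.
  - norm; f_equal; auto; fcase H; auto.
Qed.

Lemma subst_shift N : forall j X, subst j X (shift j N) = N.
Proof.
  induction N using term_ind'; intros j X.
  - arith.
  - simpl; f_equal; auto.
  - simpl; f_equal; auto.
  - simpl; f_equal; auto.
  - norm; f_equal.
    transitivity (fmap (fun x => x) fs); [fcase H; auto|].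
    clear; induction fs as [|[]]; simpl; f_equal; auto.
  - norm; f_equal; auto.
    transitivity (fmap (fun x => x) fs); [fcase H; auto|].
    clear; induction fs as [|[]]; simpl; f_equal; auto.
Qed.

Lemma subst_subst M : forall j k N P,
  subst (j + k) N (subst j P M) = subst j (subst (j + k) N P) (subst (S (j + k)) (shift j N) M).
Proof.
  induction M using term_ind'; intros j k N P.
  - simpl. destruct (Nat.ltb_spec n j).
    + arith.
    + destruct (Nat.eqb_spec n j).
      * subst. arith.
      * arith. subst. rewrite subst_shift. reflexivity.
  - simpl; f_equal. specialize (IHM (S j) k (shift 0 N) (shift 0 P)). simpl in IHM. rewrite IHM. f_equal.
    + rewrite (shift_subst_lo P 0) by lia. reflexivity.
    + f_equal. rewrite shift_shift by lia. reflexivity.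
  - simpl; f_equal; auto.
  - simpl; f_equal; auto.
  - norm; f_equal; fcase H; auto.
  - norm; f_equal; auto; fcase H; auto.
Qed.

Inductive par : term -> term -> Prop :=
| p_var n : par (Var n) (Var n)
| p_lam M M' : par M M' -> par (Lam M) (Lam M')
| p_app M M' N N' : par M M' -> par N N' -> par (App M N) (App M' N')
| p_beta M M' N N' : par M M' -> par N N' -> par (App (Lam M) N) (subst 0 N' M')
| p_proj M M' l : par M M' -> par (Proj M l) (Proj M' l)
| p_projr fs fs' l M : fpar fs fs' -> lookup l fs' = Some M -> par (Proj (Rec fs) l) M
| p_rec fs fs' : fpar fs fs' -> par (Rec fs) (Rec fs')
| p_ext M M' fs fs' : par M M' -> fpar fs fs' -> par (Ext M fs) (Ext M' fs')
| p_extr fs1 fs1' fs2 fs2' : fpar fs1 fs1' -> fpar fs2 fs2' ->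
    par (Ext (Rec fs1) fs2) (Rec (rmerge fs1' fs2'))
with fpar : list (label*term) -> list (label*term) -> Prop :=
| fp_nil : fpar [] []
| fp_cons l M M' fs fs' : par M M' -> fpar fs fs' -> fpar ((l,M)::fs) ((l,M')::fs').

Scheme par_mut := Induction for par Sort Prop
with fpar_mut := Induction for fpar Sort Prop.

Lemma fpar_F2 fs fs' : fpar fs fs' <-> Forall2 (fun p q => fst p = fst q /\ par (snd p) (snd q)) fs fs'.
Proof.
  split.
  - induction 1; constructor; auto.
  - induction 1 as [|[l M] [l' M'] ? ? [E H] _ IH]; simpl in *; subst; constructor; auto.
Qed.

Lemma fpar_rmerge a a' b b' : fpar a a' -> fpar b b' -> fpar (rmerge a b) (rmerge a' b').
Proof.
  rewrite !fpar_F2; intros; apply rmerge_F2; auto; intros p q [E _]; auto.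
Qed.

Lemma fpar_lookup fs fs' l M : fpar fs fs' -> lookup l fs = Some M ->
  exists M', lookup l fs' = Some M' /\ par M M'.
Proof.
  induction 1; simpl; [discriminate|].
  destruct (l0 =? l); auto. intros [= <-]; eauto.
Qed.

Lemma par_refl t : par t t.
Proof.
  induction t using term_ind'; try constructor; auto.
  all: induction H as [|[l M] fs HM _ IH]; constructor; auto.
Qed.

Lemma fpar_refl fs : fpar fs fs.
Proof. induction fs as [|[l M] fs IH]; constructor; auto using par_refl. Qed.

Lemma par_shift : forall M M', par M M' -> forall c, par (shift c M) (shift c M').
Proof.
  apply (par_mut (fun M M' _ => forall c, par (shift c M) (shift c M'))
                 (fun fs fs' _ => forall c, fpar (fmap (shift c) fs) (fmap (shift c) fs'))); intros.
  - apply par_refl.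
  - simpl; constructor; auto.
  - simpl; constructor; auto.
  - simpl. pose proof (shift_subst_hi M' 0 c N') as E. simpl in E. rewrite E.
    constructor; auto.
  - simpl; constructor; auto.
  - simpl. eapply p_projr; eauto. rewrite lookup_fmap, e; reflexivity.
  - norm; constructor; auto.
  - norm; constructor; auto.
  - norm. rewrite <- rmerge_fmap. constructor; auto.
  - constructor.
  - rewrite !fmap_cons; constructor; auto.
Qed.

Lemma par_subst : forall M M', par M M' -> forall k N N', par N N' -> par (subst k N M) (subst k N' M').
Proof.
  apply (par_mut (fun M M' _ => forall k N N', par N N' -> par (subst k N M) (subst k N' M'))
                 (fun fs fs' _ => forall k N N', par N N' -> fpar (fmap (subst k N) fs) (fmap (subst k N') fs'))); intros.
  - simpl. destruct (n <? k); [constructor|]. destruct (n =? k); auto; constructor.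
  - simpl; constructor; auto using par_shift.
  - simpl; constructor; auto.
  - simpl. pose proof (subst_subst M' 0 k N'0 N') as E. simpl in E. rewrite E.
    constructor; auto using par_shift.
  - simpl; constructor; auto.
  - simpl. eapply p_projr; eauto. rewrite lookup_fmap, e; reflexivity.
  - norm; constructor; auto.
  - norm; constructor; auto.
  - norm. rewrite <- rmerge_fmap. constructor; auto.
  - constructor.
  - rewrite !fmap_cons; constructor; auto.
Qed.

Fixpoint dev (t : term) : term :=
  match t with
  | Var n => Var n
  | Lam M => Lam (dev M)
  | App M N => match M with
               | Lam M0 => subst 0 (dev N) (dev M0)
               | _ => App (dev M) (dev N) end
  | Proj M l => match M with
      | Rec fs => match lookup l (map (fun '(k, P) => (k, dev P)) fs) with
                  | Some P => P
                  | None => Proj (Rec (map (fun '(k, P) => (k, dev P)) fs)) l end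
      | _ => Proj (dev M) l end
  | Rec fs => Rec (map (fun '(k, P) => (k, dev P)) fs)
  | Ext M fs => match M with
      | Rec fs1 => Rec (rmerge (map (fun '(k, P) => (k, dev P)) fs1) (map (fun '(k, P) => (k, dev P)) fs))
      | _ => Ext (dev M) (map (fun '(k, P) => (k, dev P)) fs) end
  end.

Lemma dev_rec fs : dev (Rec fs) = Rec (fmap dev fs). Proof. reflexivity. Qed.
Lemma dev_beta M N : dev (App (Lam M) N) = subst 0 (dev N) (dev M). Proof. reflexivity. Qed.
Lemma dev_app M N : (forall M0, M <> Lam M0) -> dev (App M N) = App (dev M) (dev N).
Proof. destruct M; intros H; try reflexivity. exfalso; eapply H; reflexivity. Qed.
Lemma dev_projr fs l : dev (Proj (Rec fs) l) =
  match lookup l (fmap dev fs) with Some P => P | None => Proj (Rec (fmap dev fs)) l end.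
Proof. reflexivity. Qed.
Lemma dev_proj M l : (forall fs, M <> Rec fs) -> dev (Proj M l) = Proj (dev M) l.
Proof. destruct M; intros H; try reflexivity. exfalso; eapply H; reflexivity. Qed.
Lemma dev_extr fs1 fs : dev (Ext (Rec fs1) fs) = Rec (rmerge (fmap dev fs1) (fmap dev fs)).
Proof. reflexivity. Qed.
Lemma dev_ext M fs : (forall fs1, M <> Rec fs1) -> dev (Ext M fs) = Ext (dev M) (fmap dev fs).
Proof. destruct M; intros H; try reflexivity. exfalso; eapply H; reflexivity. Qed.

Lemma triangle : forall t t', par t t' -> par t' (dev t).
Proof.
  apply (par_mut (fun t t' _ => par t' (dev t)) (fun fs fs' _ => fpar fs' (fmap dev fs))); intros.
  - constructor.
  - simpl; constructor; auto.
  - destruct (match M with Lam M0 => Some M0 | _ => None end) as [M0|] eqn:EM.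
    + destruct M; try discriminate. injection EM as ->.
      rewrite dev_beta. inversion p; subst. simpl in H. inversion H; subst.
      constructor; auto.
    + rewrite dev_app by (intros M0 ->; discriminate). constructor; auto.
  - rewrite dev_beta. apply par_subst; auto.
  - destruct (match M with Rec fs => Some fs | _ => None end) as [fs|] eqn:EM.
    + destruct M; try discriminate. injection EM as ->.
      rewrite dev_projr. inversion p; subst. rewrite dev_rec in H. inversion H; subst.
      destruct (lookup l (fmap dev fs)) eqn:E.
      * eapply p_projr; eauto.
      * constructor; constructor; auto.
    + rewrite dev_proj by (intros fs ->; discriminate). constructor; auto.
  - rewrite dev_projr. destruct (fpar_lookup _ _ _ _ H e) as [D [E1 E2]]. rewrite E1; auto.
  - rewrite dev_rec; constructor; auto.
  - destruct (match M with Rec fs => Some fs | _ => None end) as [fs1|] eqn:EM.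
    + destruct M; try discriminate. injection EM as ->.
      rewrite dev_extr. inversion p; subst. rewrite dev_rec in H. inversion H; subst.
      constructor; auto.
    + rewrite dev_ext by (intros fs1 ->; discriminate). constructor; auto.
  - rewrite dev_extr. constructor. apply fpar_rmerge; auto.
  - constructor.
  - rewrite fmap_cons; constructor; auto.
Qed.

Scheme step_mut := Induction for step Sort Prop
with fstep_mut := Induction for fstep Sort Prop.

Lemma step_par : forall M N, step M N -> par M N.
Proof.
  apply (step_mut (fun M N _ => par M N) (fun fs fs' _ => fpar fs fs')); intros;
    try (constructor; auto using par_refl, fpar_refl; fail).
  - eapply p_projr; eauto using fpar_refl.
  - destruct p; constructor; auto using par_refl.
Qed.

Lemma red_trans M N P : red M N -> red N P -> red M P.
Proof. induction 1; eauto using red. Qed.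

Lemma red_ctx (C : term -> term) M M' : (forall a b, step a b -> step (C a) (C b)) ->
  red M M' -> red (C M) (C M').
Proof. intros HC; induction 1; eauto using red. Qed.

Lemma red_fctx (C : list (label*term) -> term) fs fs' : fpar fs fs' ->
  (forall a b, fstep a b -> step (C a) (C b)) -> (forall M M', par M M' -> red M M') ->
  red (C fs) (C fs').
Proof.
  intros H HC Hp; revert C HC; induction H; intros C HC; [constructor|].
  apply red_trans with (C ((l, M') :: fs)).
  - apply (red_ctx (fun X => C ((l, X) :: fs))); auto. intros; apply HC; constructor; auto.
  - apply (IHfpar (fun fs0 => C ((l, M') :: fs0))). intros; apply HC; constructor; auto.
Qed.

Lemma par_red : forall M N, par M N -> red M N.
Proof.
  apply (par_mut (fun M N _ => red M N)
    (fun fs fs' _ => forall C : list (label*term) -> term,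
       (forall a b, fstep a b -> step (C a) (C b)) -> red (C fs) (C fs'))); intros.
  - constructor.
  - apply (red_ctx Lam); auto using step.
  - apply red_trans with (App M' N).
    + apply (red_ctx (fun X => App X N)); auto using step.
    + apply (red_ctx (fun X => App M' X)); auto using step.
  - apply red_trans with (App (Lam M') N').
    + apply red_trans with (App (Lam M') N).
      * apply (red_ctx (fun X => App (Lam X) N)); auto using step.
      * apply (red_ctx (fun X => App (Lam M') X)); auto using step.
    + econstructor; [constructor|constructor].
  - apply (red_ctx (fun X => Proj X l)); auto using step.
  - apply red_trans with (Proj (Rec fs') l).
    + apply (H (fun X => Proj (Rec X) l)); auto using step.
    + econstructor; [constructor; eauto|constructor].
  - apply (H (fun X => Rec X)); auto using step.
  - apply red_trans with (Ext M' fs).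
    + apply (red_ctx (fun X => Ext X fs)); auto using step.
    + apply (H0 (fun X => Ext M' X)); auto using step.
  - apply red_trans with (Ext (Rec fs1') fs2').
    + apply red_trans with (Ext (Rec fs1') fs2).
      * apply (H (fun X => Ext (Rec X) fs2)); auto using step.
      * apply (H0 (fun X => Ext (Rec fs1') X)); auto using step.
    + econstructor; [constructor|constructor].
  - constructor.
  - apply red_trans with (C ((l, M') :: fs)).
    + apply (red_ctx (fun X => C ((l, X) :: fs))); auto. intros; apply H1; constructor; auto.
    + apply (H0 (fun fs0 => C ((l, M') :: fs0))). intros; apply H1; constructor; auto.
Qed.

Inductive pstar : term -> term -> Prop :=
| ps_refl M : pstar M M
| ps_step M N P : par M N -> pstar N P -> pstar M P.

Lemma strip t t1 t2 : par t t1 -> pstar t t2 -> exists t3, pstar t1 t3 /\ par t2 t3.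
Proof.
  intros H1 H2; revert t1 H1; induction H2 as [M|M N P HMN HNP IH]; intros t1 H1.
  - exists t1; split; [constructor|auto].
  - destruct (IH (dev M) (triangle _ _ HMN)) as [t3 [A B]].
    exists t3; split; auto. econstructor; [apply triangle; eauto|exact A].
Qed.

Lemma pstar_confl t t1 t2 : pstar t t1 -> pstar t t2 -> exists t3, pstar t1 t3 /\ pstar t2 t3.
Proof.
  intros H1; revert t2; induction H1 as [M|M N P HMN HNP IH]; intros t2 H2.
  - exists t2; split; [auto|constructor].
  - destruct (strip _ _ _ HMN H2) as [u [A B]].
    destruct (IH _ A) as [t3 [C D]]. exists t3; split; auto. econstructor; eauto.
Qed.

Lemma red_pstar M N : red M N -> pstar M N.
Proof. induction 1; econstructor; eauto using step_par. Qed.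

Lemma pstar_red M N : pstar M N -> red M N.
Proof. induction 1; [constructor|]; eauto using red_trans, par_red. Qed.

Lemma Forall_fmap (P Q : term -> Prop) f fs :
  Forall (fun p => P (snd p) -> Q (f (snd p))) fs -> Forall (fun p => P (snd p)) fs ->
  Forall (fun p => Q (snd p)) (fmap f fs).
Proof.
  induction fs as [|[l M] fs IH]; intros H1 H2; inversion H1; inversion H2; subst; simpl in *; constructor; auto.
Qed.

Lemma shift_wf M : forall c, wf M -> wf (shift c M).
Proof.
  induction M using term_ind'; intros c HW; inversion HW; subst.
  - simpl; destruct (c <=? n); constructor.
  - simpl; constructor; auto.
  - simpl; constructor; auto.
  - simpl; constructor; auto.
  - norm. constructor. unfold rec_ok; rewrite fmap_fst; auto.
    eapply Forall_fmap; [|eauto]. eapply Forall_impl; [|exact H]. intros [] HH; simpl; auto.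
  - norm. constructor; auto. unfold rec_ok; rewrite fmap_fst; auto.
    eapply Forall_fmap; [|eauto]. eapply Forall_impl; [|exact H]. intros [] HH; simpl; auto.
Qed.

Lemma subst_wf M : forall k N, wf N -> wf M -> wf (subst k N M).
Proof.
  induction M using term_ind'; intros k N HN HW; inversion HW; subst.
  - simpl; destruct (n <? k); [constructor|]. destruct (n =? k); auto; constructor.
  - simpl; constructor; auto using shift_wf.
  - simpl; constructor; auto.
  - simpl; constructor; auto.
  - norm. constructor. unfold rec_ok; rewrite fmap_fst; auto.
    eapply Forall_fmap; [|eauto]. eapply Forall_impl; [|exact H]. intros [] HH; simpl; auto.
  - norm. constructor; auto. unfold rec_ok; rewrite fmap_fst; auto.
    eapply Forall_fmap; [|eauto]. eapply Forall_impl; [|exact H]. intros [] HH; simpl; auto.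
Qed.

Lemma lookup_In l fs M : lookup l fs = Some M -> In (l, M) fs.
Proof.
  induction fs as [|[k N] fs IH]; simpl; [discriminate|].
  destruct (Nat.eqb_spec k l); auto. intros [= <-]; subst; auto.
Qed.

Lemma step_wf : forall M N, step M N -> wf M -> wf N.
Proof.
  apply (step_mut (fun M N _ => wf M -> wf N)
    (fun fs fs' _ => map fst fs = map fst fs' /\
       (Forall (fun p => wf (snd p)) fs -> Forall (fun p => wf (snd p)) fs'))); intros.
  - inversion H; subst. inversion H2; subst. apply subst_wf; auto.
  - inversion H as [| | | ? ? W1 | |]; subst. inversion W1 as [| | | | ? W2 W3 |]; subst. apply lookup_In in e.
    rewrite Forall_forall in W3. apply (W3 _ e).
  - inversion H as [| | | | | ? ? W1 W2 W3]; subst. inversion W1 as [| | | | ? W4 W5 |]; subst. constructor.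
    + apply rmerge_sorted; auto.
    + apply Forall_forall. intros x Hx. rewrite Forall_forall in W3, W5.
      destruct (rmerge_In _ _ _ Hx); auto.
  - inversion H0; subst; constructor; auto.
  - inversion H0; subst; constructor; auto.
  - inversion H0; subst; constructor; auto.
  - inversion H0; subst; constructor; auto.
  - destruct H as [E F]. inversion H0; subst; constructor; auto. unfold rec_ok in *; rewrite <- E; auto.
  - inversion H0; subst; constructor; auto.
  - destruct H as [E F]. inversion H0; subst; constructor; auto. unfold rec_ok in *; rewrite <- E; auto.
  - split; auto. intros HF; inversion HF; subst; constructor; auto.
  - destruct H as [E F]. split; [simpl; f_equal; auto|].
    intros HF; inversion HF; subst; constructor; auto.
Qed.

Lemma red_wf M N : red M N -> wf M -> wf N.
Proof. induction 1; eauto using step_wf. Qed.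

Theorem theorem3p2 : forall M M1 M2 : term,
  wf M -> red M M1 -> red M M2 ->
  exists M3 : term, wf M3 /\ red M1 M3 /\ red M2 M3.
Proof.
  intros M M1 M2 HW H1 H2.
  destruct (pstar_confl _ _ _ (red_pstar _ _ H1) (red_pstar _ _ H2)) as [M3 [A B]].
  exists M3; split; [|split; apply pstar_red; auto].
  eapply red_wf; [apply pstar_red; exact A|]. eapply red_wf; eauto.
Qed.
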